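(* Let $X$ be an infinite-dimensional real normed linear space with zero $\theta$ whose norm is strictly convex. Then for every $m\in\mathbb{N}$ and every $E$ with $B(\theta,1)\subseteq E\subseteq\overline{B}(\theta,1)$ and $E=\bigcup_{i=1}^m A_i$, where $A_i\cong A_j$ for all $i,j$, either $\theta\in\bigcap_{i=1}^m\mathrm{Int}\,A_i$ or $\theta\notin\bigcup_{i=1}^m\mathrm{Int}\,A_i$.
   Context: $B(\theta,1)=\{x:\|x\|<1\}$, $\overline{B}(\theta,1)=\{x:\|x\|\leqslant1\}$. The norm is strictly convex if for all $x\ne y$ with $\|x\|=\|y\|=1$ and $\lambda\in(0,1)$, $\|\lambda x+(1-\lambda)y\|<1$. Sets $A,B\subseteq X$ are congruent, $A\cong B$, if there is a surjective isometry $f\colon X\to X$ with $f(A)=B$. $\mathrm{Int}\,A$ is the set of $x\in A$ such that some open ball $B(x,\varepsilon)\subseteq A$. *)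

(* Defs.v *)
From HB Require Import structures.
From mathcomp Require Import all_boot all_order all_algebra.
From mathcomp Require Import all_classical all_reals all_analysis.
Set Implicit Arguments. Unset Strict Implicit. Unset Printing Implicit Defensive.
Import Order.TTheory GRing.Theory Num.Theory.
Import numFieldNormedType.Exports.
Local Open Scope classical_set_scope.
Local Open Scope ring_scope.

Definition open_unit_ball {R : realType} {X : normedModType R} : set X :=
  [set x | `|x| < 1].
Definition closed_unit_ball {R : realType} {X : normedModType R} : set X :=
  [set x | `|x| <= 1].

Definition lin_indep {R : realType} {X : normedModType R} (n : nat)
  (v : 'I_n -> X) : Prop :=
  forall c : 'I_n -> R, \sum_(i < n) c i *: v i = 0 -> forall i, c i = 0.

Definition infinite_dimensional {R : realType} (X : normedModType R) : Prop :=
  forall n : nat, exists v : 'I_n -> X, lin_indep v.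

Definition strictly_convex_norm {R : realType} (X : normedModType R) : Prop :=
  forall (x y : X) (l : R), x != y -> `|x| = 1 -> `|y| = 1 -> 0 < l < 1 ->
    `|l *: x + (1 - l) *: y| < 1.

Definition isometry {R : realType} {X : normedModType R} (f : X -> X) : Prop :=
  forall x y, `|f x - f y| = `|x - y|.

Definition congruent {R : realType} {X : normedModType R} (A B : set X) : Prop :=
  exists f : X -> X, isometry f /\ (forall y, exists x, f x = y) /\ f @` A = B.

Definition Int {R : realType} {X : normedModType R} (A : set X) : set X :=
  [set x | A x /\ exists e : R, 0 < e /\ [set y | `|y - x| < e] `<=` A].

(* Main.v *)
Require Import Defs.
From HB Require Import structures.
From mathcomp Require Import all_boot all_order all_algebra.
From mathcomp Require Import all_classical all_reals all_analysis.
From mathcomp Require Import lra ring.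
Import Order.TTheory GRing.Theory Num.Theory.
Import numFieldNormedType.Exports.
Local Open Scope classical_set_scope.
Local Open Scope ring_scope.
Section Helpers.
Local Set Implicit Arguments.
Local Unset Strict Implicit.
Lemma lip_cont (R : realType) (f : R -> R) (K : R) : 0 <= K ->
  (forall s t, `|f s - f t| <= K * `|s - t|) -> continuous f.
Proof.
move=> K0 Hf x; apply/cvgrPdist_lt => e e0.
have K1 : 0 < K + 1 by rewrite ltr_wpDl.
near=> y; apply: le_lt_trans (Hf x y) _.
near: y; apply/nbhs_normP; exists (e / (K + 1)) => /=; first by rewrite divr_gt0.
move=> y; rewrite /ball_ /= => hy.
apply: (le_lt_trans (y := (K + 1) * `|x - y|)); first by rewrite ler_wpM2r // lerDl.
by rewrite -ltr_pdivlMl // mulrC.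
Unshelve. all: by end_near.
Qed.

Lemma sc2 (R : realType) (X : normedModType R) (hsc : strictly_convex_norm X)
  (v w : X) : `|v| <= 1 -> `|w| <= 1 -> v != w -> `|2^-1 *: (v + w)| < 1.
Proof.
move=> hv hw vw; rewrite normrZ ger0_norm ?invr_ge0 ?ler0n //.
have h2 : (0:R) < 2 by rewrite ltr0n.
case: (ltrP `|v| 1) => hv1.
  have := ler_normD v w; lra.
case: (ltrP `|w| 1) => hw1.
  have := ler_normD v w; lra.
have ev : `|v| = 1 by apply/eqP; rewrite eq_le hv hv1.
have ew : `|w| = 1 by apply/eqP; rewrite eq_le hw hw1.
have := hsc v w 2^-1 vw ev ew.
have -> : (1 - 2^-1 : R) = 2^-1.
  by field.
rewrite -scalerDr normrZ ger0_norm ?invr_ge0 ?ler0n //.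
apply; rewrite invr_gt0 h2 /=; rewrite invf_lt1 //; lra.
Qed.
Definition lc (R : realType) (X : normedModType R) (n : nat) (y : 'I_n -> X)
  (c : 'I_n -> R) : X := \sum_(j < n) c j *: y j.

Lemma lc_lin (R : realType) (X : normedModType R) n (y : 'I_n -> X) a b (t : R) :
  lc y (fun j => a j + t * b j) = lc y a + t *: lc y b.
Proof.
rewrite /lc scaler_sumr -big_split; apply: eq_bigr => j _.
by rewrite scalerDl scalerA.
Qed.

Lemma lc0 (R : realType) (X : normedModType R) n (y : 'I_n -> X) :
  lc y (fun=> 0) = 0.
Proof. by rewrite /lc big1 // => j _; rewrite scale0r. Qed.

Lemma lc_scale (R : realType) (X : normedModType R) n (y : 'I_n -> X) a (t : R) :
  lc y (fun j => t * a j) = t *: lc y a.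
Proof.
have := lc_lin y (fun=> 0) a t; rewrite lc0 add0r => <-.
by apply: eq_bigr => j _; rewrite add0r.
Qed.

Lemma lc_rec (R : realType) (X : normedModType R) n (y : 'I_n.+1 -> X) c :
  lc y c = lc (fun j => y (widen_ord (leqnSn n) j)) (fun j => c (widen_ord (leqnSn n) j))
     + c ord_max *: y ord_max.
Proof. by rewrite /lc big_ord_recr. Qed.

Lemma widen_lift n (j : 'I_n) : widen_ord (leqnSn n) j = lift ord_max j.
Proof. by apply: val_inj; rewrite /= /bump leqNgt ltn_ord. Qed.

Definition ext (R : realType) n (c : 'I_n -> R) (t : R) : 'I_n.+1 -> R :=
  fun j => if unlift ord_max j is Some k then c k else t.

Lemma lc_ext (R : realType) (X : normedModType R) n (y : 'I_n.+1 -> X) c t :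
  lc y (ext c t) = lc (fun j => y (widen_ord (leqnSn n) j)) c + t *: y ord_max.
Proof.
rewrite lc_rec /ext unlift_none; congr (_ + _); apply: eq_bigr => j _.
by rewrite widen_lift liftK.
Qed.

Lemma zh1 (V : zmodType) (a b c d : V) : a - c - b = a - d - b + (d - c).
Proof. by rewrite [RHS]addrAC subrKA. Qed.
Lemma zh2 (V : zmodType) (z a b : V) : a + b = z - (z - a - b).
Proof. by rewrite -addrA -opprD subKr. Qed.
Lemma nearest (R : realType) (X : normedModType R) n :
  forall (y : 'I_n -> X) (z : X), exists c, forall c', `|z - lc y c| <= `|z - lc y c'|.
Proof.
elim: n => [|n IH] y z.
  by exists (fun=> 0) => c'; rewrite /lc !big_ord0.
set y' := fun j : 'I_n => y (widen_ord (leqnSn n) j).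
set yl := y ord_max.
have /choice [G HG] : forall t : R, exists c, forall c',
    `|z - t *: yl - lc y' c| <= `|z - t *: yl - lc y' c'|.
  by move=> t; exact: IH.
pose F t := `|z - t *: yl - lc y' (G t)|.
have Flip : forall s t, F t <= F s + `|s - t| * `|yl|.
  move=> s t; apply: le_trans (HG t (G s)) _.
  have -> : z - t *: yl - lc y' (G s) = (z - s *: yl - lc y' (G s)) + (s - t) *: yl.
    by rewrite scalerBl (zh1 _ _ _ (s *: yl)).
  by apply: le_trans (ler_normD _ _) _; rewrite normrZ.
have Fcont : continuous F.
  apply: (lip_cont (K := `|yl|)) => // s t.
  rewrite ler_norml; apply/andP; split.
    have := Flip s t; move: (F s) (F t) => a b h; lra.
  have := Flip t s; rewrite [`|t - s|]distrC; move: (F s) (F t) => a b h; lra.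
have F0 : F 0 <= `|z|.
  apply: le_trans (HG 0 (fun=> 0)) _; by rewrite lc0 scale0r !subr0.
have Flow : forall c', F (c' ord_max) <= `|z - lc y c'|.
  move=> c'; rewrite lc_rec.
  have -> : z - (lc y' (fun j => c' (widen_ord (leqnSn n) j)) + c' ord_max *: y ord_max)
    = z - c' ord_max *: yl - lc y' (fun j => c' (widen_ord (leqnSn n) j)).
    by rewrite opprD addrA addrAC.
  exact: HG.
suff [t0 Ht0] : exists t0, forall t, F t0 <= F t.
  exists (ext (G t0) t0) => c'; rewrite lc_ext.
  have -> : z - (lc y' (G t0) + t0 *: y ord_max) = z - t0 *: yl - lc y' (G t0).
    by rewrite opprD addrA addrAC.
  exact: le_trans (Ht0 _) (Flow c').
have [c0 Hc0] := IH y' yl.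
set d := `|yl - lc y' c0|.
have [d0|dpos] := eqVneq d 0.
  exists 0 => t.
  have hyl : yl = lc y' c0 by apply/eqP; rewrite -subr_eq0 -normr_eq0 -/d d0.
  apply: le_trans (HG 0 (fun j => G t j + t * c0 j)) _.
  rewrite lc_lin -hyl scale0r subr0 opprD addrA addrAC; exact: lexx.
have dgt : 0 < d by rewrite lt_def dpos normr_ge0.
pose M := 2 * `|z| / d.
have M0 : 0 <= M by rewrite /M; apply: divr_ge0; [apply: mulr_ge0 | exact: ltW].
have MM : - M <= M by lra.
have [t0 t0in Ht0] := @EVT_min R F (- M) M MM (continuous_subspaceT Fcont).
exists t0 => t.
have [tin|tout] := boolP (t \in `[- M, M]); first exact: Ht0.
have tM : M < `|t|.
  move: tout; rewrite in_itv /= -ler_norml; by rewrite ltNge.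
have t0' : t != 0.
  by apply/eqP => t00; move: tM; rewrite t00 normr0 ltNge M0.
apply: le_trans (Ht0 0 _) _.
  by rewrite in_itv /= oppr_le0 M0.
apply: le_trans F0 _.
set L := lc y' (G t).
have h1 : `|t *: yl + L| <= F t + `|z|.
  have -> : t *: yl + L = z - (z - t *: yl - L) by exact: (@zh2 _ z).
  by apply: le_trans (ler_normB _ _) _; rewrite addrC.
have h2 : `|t| * d <= `|t *: yl + L|.
  have -> : t *: yl + L = t *: (yl - lc y' (fun j => - t^-1 * G t j)).
    by rewrite lc_scale scalerDr scalerN scaleNr scalerN opprK scalerA divff // scale1r.
  rewrite normrZ ler_wpM2l //; exact: Hc0.
have h3 : M * d = 2 * `|z| by rewrite /M mulrVK // unitfE.
have h4 : M * d <= `|t| * d by rewrite ler_wpM2r // ltW.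
lra.
Qed.
Lemma lc_delta (R : realType) (X : normedModType R) n (y : 'I_n -> X) i :
  lc y (fun j => if j == i then 1 else 0) = y i.
Proof.
rewrite /lc (bigD1 i) //= eqxx scale1r big1 ?addr0 // => j /negbTE ->.
by rewrite scale0r.
Qed.

Lemma outside (R : realType) (X : normedModType R) (hinf : infinite_dimensional X)
  n (y : 'I_n -> X) : exists z, forall c, z != lc y c.
Proof.
have [//|H] := pselect (exists z, forall c, z != lc y c).
exfalso.
have [v hv] := hinf n.+1.
have /choice [C HC] : forall k, exists c, v k = lc y c.
  move=> k; apply: contrapT => Hk; apply: H; exists (v k) => c; apply/eqP => e.
  by apply: Hk; exists c.
pose Mx : 'M[R]_(n.+1, n) := \matrix_(i, j) C i j.
set K := kermx Mx.
have rk : (0 < \rank K)%N.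
  by rewrite mxrank_ker subn_gt0 (leq_ltn_trans (rank_leq_col Mx)).
have KN0 : K != 0 by apply: contraTneq rk => ->; rewrite mxrank0.
have [i Hi] : exists i, row i K != 0.
  apply: contrapT => Hn; move/negP: KN0; apply; apply/eqP/row_matrixP => i.
  rewrite row0; apply/eqP; apply: contrapT => ne; apply: Hn; exists i; exact/negP.
set w := row i K.
have wM : w *m Mx = 0 by rewrite /w -row_mul mulmx_ker row0.
have Hsum : \sum_(k < n.+1) w 0 k *: v k = 0.
  under eq_bigr => k _ do rewrite HC /lc scaler_sumr.
  rewrite exchange_big /=; apply: big1 => j _.
  under eq_bigr => k _ do rewrite scalerA.
  rewrite -scaler_suml.
  have -> : \sum_(k < n.+1) w 0 k * C k j = (w *m Mx) 0 j.
    rewrite mxE; apply: eq_bigr => k _; by rewrite ?mxE.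
  by rewrite wM mxE scale0r.
have hw := hv (fun k => w 0 k) Hsum; move/negP: Hi; apply; apply/eqP/rowP => k.
by apply: (etrans (hw k)); rewrite mxE.
Qed.
Lemma birkhoff (R : realType) (X : normedModType R) (hinf : infinite_dimensional X)
  n (y : 'I_n -> X) : exists u : X, `|u| = 1 /\ forall i, 1 <= `|u - y i|.
Proof.
have [z hz] := outside hinf y.
have [c hc] := nearest y z.
set w := lc y c.
set dd := `|z - w|.
have dd0 : dd != 0 by rewrite /dd normr_eq0 subr_eq0; exact: hz.
have ddp : 0 < dd by rewrite lt_def dd0 normr_ge0.
exists (dd^-1 *: (z - w)); split.
  by rewrite normrZ ger0_norm ?invr_ge0 ?ltW // mulVf.
move=> i.
have e : dd^-1 *: (z - w) - y i
    = dd^-1 *: (z - lc y (fun j => c j + dd * (if j == i then 1 else 0))).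
  rewrite lc_lin lc_delta -/w [in RHS]opprD [in RHS]addrA [RHS]scalerBr [in RHS]scalerA.
  by rewrite mulVf // scale1r.
rewrite e normrZ ger0_norm; last by rewrite invr_ge0 ltW.
rewrite -[X in X <= _](mulVf dd0).
apply: ler_wpM2l; [by rewrite invr_ge0 ltW | exact: hc].
Qed.

Lemma key_lemma0 (R : realType) (X : normedModType R)
  (hinf : infinite_dimensional X) (hsc : strictly_convex_norm X)
  (m : nat) (a b : 'I_m -> X) : (forall i, a i != b i) ->
  exists x : X, `|x| < 1 /\ forall i, 1 < `|x - a i| \/ 1 < `|x - b i|.
Proof.
move=> hab.
pose mid i := (2:R)^-1 *: (a i + b i).
have [u [u1 hu]] := birkhoff hinf mid.
have hmax : forall i, 1 < Num.max `|u - a i| `|u - b i|.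
  move=> i; rewrite ltNge; apply/negP; rewrite ge_max => /andP [ha hb].
  have ne : u - a i != u - b i.
    apply/negP => /eqP e; move/negP: (hab i); apply; apply/eqP.
    by have := congr1 (fun x => u - x) e; rewrite !subKr.
  have := sc2 hsc ha hb ne.
  have -> : (2:R)^-1 *: (u - a i + (u - b i)) = u - mid i.
    have h2 : (2:R)^-1 + 2^-1 = 1 by field.
    by rewrite addrACA -opprD scalerBr scalerDr -scalerDl h2 scale1r.
  by rewrite ltNge hu.
pose g i := Num.max `|u - a i| `|u - b i| - 1.
pose eps := \big[Num.min/1]_(i < m) g i.
have eps0 : 0 < eps.
  apply: lt_bigmin => // i _; rewrite /g subr_gt0; exact: hmax.
have eps1 : eps <= 1 by apply: bigmin_le_id.
have epsg : forall i, eps <= g i by move=> i; apply: bigmin_le.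
exists ((1 - eps / 2) *: u); split.
  rewrite normrZ u1 mulr1 ger0_norm; first lra.
  lra.
have hux : `|u - (1 - eps / 2) *: u| = eps / 2.
  rewrite scalerBl scale1r subKr normrZ u1 mulr1 ger0_norm //; lra.
move=> i.
have ta : `|u - a i| <= `|u - (1 - eps / 2) *: u| + `|(1 - eps / 2) *: u - a i|.
  by rewrite -[u - a i](subrKA ((1 - eps / 2) *: u)) ler_normD.
have tb : `|u - b i| <= `|u - (1 - eps / 2) *: u| + `|(1 - eps / 2) *: u - b i|.
  by rewrite -[u - b i](subrKA ((1 - eps / 2) *: u)) ler_normD.
have := epsg i; rewrite /g.
have -> : (eps <= Num.max `|u - a i| `|u - b i| - 1) =
          (1 + eps <= Num.max `|u - a i| `|u - b i|).
  by rewrite lerBrDl addrC.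
rewrite le_max => /orP [h|h].
  by left; rewrite hux in ta; lra.
by right; rewrite hux in tb; lra.
Qed.
End Helpers.
Theorem mainTheorem11 (R : realType) (X : normedModType R)
  (hinf : infinite_dimensional X) (hsc : strictly_convex_norm X)
  (m : nat) (E : set X) (A : 'I_m -> set X) :
  open_unit_ball `<=` E -> E `<=` closed_unit_ball ->
  E = \bigcup_(i in [set: 'I_m]) A i ->
  (forall i j, congruent (A i) (A j)) ->
  (\bigcap_(i in [set: 'I_m]) Int (A i)) 0 \/
  ~ (\bigcup_(i in [set: 'I_m]) Int (A i)) 0.
Proof.
move=> hBE hEB hEA hcong.
have [[k Hk]|Hn] := pselect (exists k, Int (A k) 0); last first.
  by right=> -[k _ Hk]; apply: Hn; exists k.
left=> j _.
have [//|Hj] := pselect (Int (A j) 0).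
exfalso.
have AE : forall i x, A i x -> E x by move=> i x Aix; rewrite hEA; exists i.
have [g [giso [gsurj gim]]] := hcong j k.
case: Hk => Ak0 [e [e0 He]].
have : (g @` A j) 0 by rewrite gim.
case=> q Ajq gq0.
have [q0|qn0] := eqVneq q 0.
  apply: Hj; split; first by rewrite -q0.
  exists e; split=> // y; rewrite /= subr0 => hy.
  have : A k (g y).
    apply: He => /=; rewrite -gq0 q0 giso; by rewrite subr0.
  rewrite -gim => -[x Ajx gxy].
  have : `|x - y| = 0 by rewrite -giso gxy subrr normr0.
  by move/eqP; rewrite normr_eq0 subr_eq0 => /eqP <-.
set r := g 0.
have nr : `|r| = `|q| by have := giso 0 q; rewrite gq0 subr0 sub0r normrN.
have lens : forall x, A k x -> `|x| <= 1 /\ `|x - r| <= 1.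
  move=> x Akx; split; first exact: (hEB _ (AE _ _ Akx)).
  move: Akx; rewrite -gim => -[x' Ajx' <-].
  rewrite /r giso subr0; exact: (hEB _ (AE _ _ Ajx')).
have /choice [h Hh] : forall i : 'I_m, exists f : X -> X,
    Defs.isometry f /\ (forall y, exists x, f x = y) /\ f @` A k = A i.
  by move=> i; exact: hcong.
have hab : forall i, h i 0 != h i r.
  move=> i; apply/negP => /eqP habi.
  have : `|h i 0 - h i r| = 0 by rewrite habi subrr normr0.
  rewrite (Hh i).1 sub0r normrN nr => /eqP; rewrite normr_eq0.
  by move/eqP; apply/eqP.
have [x [x1 Hx]] := key_lemma0 hinf hsc hab.
have : E x by apply: hBE.
rewrite hEA => -[i _ Aix].
move: Aix; rewrite -(Hh i).2.2 => -[x' Akx' hx'].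
have [l1 l2] := lens _ Akx'.
case: (Hx i); rewrite -hx' (Hh i).1.
  by rewrite subr0; apply/negP; rewrite -leNgt.
by apply/negP; rewrite -leNgt.
Qed.
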